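(* Every partition tautology is a subset tautology. Moreover the inclusion is strict: for any set $U$ and any partition $\sigma$ on $U$ with $\sigma\neq\mathbf{0}$ and $\sigma\neq\mathbf{1}$ (such $\sigma$ exist when $|U|\ge 3$), one has $\sigma\vee(\sigma\Rightarrow\mathbf{0})=\sigma\neq\mathbf{1}$; hence the formula $x\vee(x\Rightarrow\mathbf{0})$ is a subset tautology but not a partition tautology.
   Context: Formulas are built from variables and the constants $\mathbf{0},\mathbf{1}$ using the binary connectives $\vee,\wedge,\Rightarrow$. A formula is a subset tautology if, for every nonempty set $U$ and every assignment of subsets of $U$ to the variables, it evaluates to $U$ when $\vee,\wedge$ are interpreted as $\cup,\cap$, $S\Rightarrow T$ as $(U\setminus S)\cup T$, $\mathbf{0}$ as $\emptyset$ and $\mathbf{1}$ as $U$. A partition on a set $U$ is a set of non-empty, pairwise disjoint subsets of $U$ (called blocks) whose union is $U$. The discrete partition is $\mathbf{1}=\{\{u\}:u\in U\}$ and the indiscrete partition is $\mathbf{0}=\{U\}$. The join $\pi\vee\sigma$ is the partition whose blocks are the non-empty intersections $B\cap C$, $B\in\pi$, $C\in\sigma$. The meet $\pi\wedge\sigma$ is the partition whose blocks are the equivalence classes of the equivalence relation on $U$ generated by: $u\sim u'$ if $u,u'$ lie in a common block of $\pi$ or in a common block of $\sigma$. The partition implication $\sigma\Rightarrow\pi$ is the partition obtained from $\pi$ by replacing every block $B\in\pi$ that is contained in some block of $\sigma$ by the singletons $\{u\}$, $u\in B$, and leaving every block of $\pi$ not contained in any block of $\sigma$ unchanged. A formula is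 a partition tautology if, for every set $U$ with $|U|\ge 2$ and every assignment of partitions on $U$ to the variables, it evaluates to $\mathbf{1}$ when $\vee,\wedge,\Rightarrow,\mathbf{0},\mathbf{1}$ are interpreted as the partition join, meet, implication, indiscrete and discrete partitions. *)

(* Defs.v *)
From mathcomp Require Import all_boot.
From mathcomp Require Import boolp classical_sets.
From Stdlib Require Import Relations.Relation_Operators.
Set Implicit Arguments. Unset Strict Implicit. Unset Printing Implicit Defensive.
Local Open Scope classical_set_scope.

Inductive formula : Type :=
| FVar : nat -> formula
| FZero : formula
| FOne : formula
| FOr : formula -> formula -> formula
| FAnd : formula -> formula -> formula
| FImp : formula -> formula -> formula.

Fixpoint sub_eval {U : Type} (v : nat -> set U) (f : formula) : set U :=
  match f with
  | FVar n => v n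
  | FZero => set0
  | FOne => setT
  | FOr a b => sub_eval v a `|` sub_eval v b
  | FAnd a b => sub_eval v a `&` sub_eval v b
  | FImp a b => (~` sub_eval v a) `|` sub_eval v b
  end.

Definition subset_tautology (f : formula) : Prop :=
  forall (U : Type), (exists u : U, True) ->
  forall v : nat -> set U, sub_eval v f = setT.

Definition is_partition (U : Type) (P : set (set U)) : Prop :=
  [/\ (forall B, P B -> B !=set0),
      (forall B C, P B -> P C -> B <> C -> B `&` C = set0)
    & (forall u : U, exists B, P B /\ B u)].

(* discrete partition 1 and indiscrete partition 0 *)
Definition pdiscrete {U : Type} : set (set U) := [set X | exists u : U, X = [set u]].
Definition pindiscrete {U : Type} : set (set U) := [set setT].

Definition pjoin (U : Type) (P Q : set (set U)) : set (set U) :=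
  [set X | exists B C, [/\ P B, Q C, X = B `&` C & X !=set0]].

Definition pmeet_rel (U : Type) (P Q : set (set U)) : U -> U -> Prop :=
  fun u u' => exists B, (P B \/ Q B) /\ B u /\ B u'.
Definition pmeet (U : Type) (P Q : set (set U)) : set (set U) :=
  [set X | exists u : U,
     X = [set u' | clos_refl_sym_trans U (pmeet_rel P Q) u u']].

(* implication S => P: blocks of P contained in some block of S are
   replaced by singletons, the others are kept *)
Definition pimp (U : Type) (S P : set (set U)) : set (set U) :=
  [set X | (P X /\ ~ (exists C, S C /\ X `<=` C))
        \/ (exists B u, [/\ P B, (exists C, S C /\ B `<=` C), B u & X = [set u]])].

Fixpoint part_eval {U : Type} (v : nat -> set (set U)) (f : formula) : set (set U) :=
  match f with
  | FVar n => v n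
  | FZero => @pindiscrete U
  | FOne => @pdiscrete U
  | FOr a b => pjoin (part_eval v a) (part_eval v b)
  | FAnd a b => pmeet (part_eval v a) (part_eval v b)
  | FImp a b => pimp (part_eval v a) (part_eval v b)
  end.

Definition partition_tautology (f : formula) : Prop :=
  forall (U : Type), (exists u u' : U, u <> u') ->
  forall v : nat -> set (set U), (forall n, is_partition (v n)) ->
  part_eval v f = @pdiscrete U.

Definition excluded_middle_formula : formula :=
  FOr (FVar 0) (FImp (FVar 0) FZero).

(* Main.v *)
Require Import Defs.
From mathcomp Require Import all_boot.
From mathcomp Require Import boolp classical_sets.
From Stdlib Require Import Relations.Relation_Operators.
Local Open Scope classical_set_scope.

Fixpoint beval (b : nat -> bool) (f : formula) : bool :=
  match f with
  | FVar n => b n | FZero => false | FOne => true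
  | FOr x y => beval b x || beval b y
  | FAnd x y => beval b x && beval b y
  | FImp x y => ~~ beval b x || beval b y
  end.

Lemma sub_beval U (v : nat -> set U) u f :
  sub_eval v f u <-> beval (fun n => `[< v n u >]) f.
Proof.
elim: f => [n|||x IHx y IHy|x IHx y IHy|x IHx y IHy] /=.
- by split => [/asboolP|/asboolP].
- by split.
- by split.
- split => [[/IHx->|/IHy->]|/orP[/IHx|/IHy]]; rewrite ?orbT //; by [left|right].
- split => [[/IHx-> /IHy->]|/andP[/IHx ? /IHy ?]] //.
- split.
  + case=> [H|/IHy->]; last by rewrite orbT.
    by apply/orP; left; apply/negP => /IHx.
  + case/orP => [/negP H|/IHy]; [left => /IHx|right] => //.
Qed.

Definition PB (c : bool) : set (set bool) := if c then pdiscrete else pindiscrete.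

Lemma eqS (T : Type) (A B : set T) : (forall x, A x <-> B x) -> A = B.
Proof. by move=> H; apply: funext => x; apply: propext. Qed.

Lemma setT_not1 (u : bool) : setT <> [set u].
Proof.
move=> H.
have H2 : [set u] (~~ u) by rewrite -H.
move: H2 => /=; by case: u {H}.
Qed.

Lemma join_PB a b : pjoin (PB a) (PB b) = PB (a || b).
Proof.
apply: eqS => X; case: a; case: b => /=; split.
all: rewrite /pjoin /pdiscrete /pindiscrete /=.
- case=> B [C [[u ->] [w ->] -> [x [/= Hu Hw]]]]; exists w; subst.
  by apply: eqS => y /=; split => [[]|->].
- case=> u ->; exists [set u], [set u]; split => //; try by exists u.
  by rewrite setIid.
- case=> B [C [[w ->] -> -> _]]; exists w.
  by rewrite setIT.
- case=> u ->; exists [set u], setT; split => //; try by exists u.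
  by rewrite setIT.
- case=> B [C [-> [w ->] -> _]]; exists w.
  by rewrite setTI.
- case=> u ->; exists setT, [set u]; split => //; try by exists u.
  by rewrite setTI.
- by case=> B [C [-> -> -> _]]; rewrite setIT.
- move=> ->; exists setT, setT; split => //; first by rewrite setIT.
  by exists true.
Qed.

Lemma crst_eq U (R : U -> U -> Prop) : (forall x y, R x y -> x = y) ->
  forall x y, clos_refl_sym_trans U R x y -> x = y.
Proof.
move=> HR x y H; induction H.
- by apply: HR.
- by [].
- by rewrite IHclos_refl_sym_trans.
- by rewrite IHclos_refl_sym_trans1.
Qed.

Lemma meet_PB a b : pmeet (PB a) (PB b) = PB (a && b).
Proof.
case: a; case: b => /=; rewrite /pmeet /pdiscrete /pindiscrete.
- have R1 : forall x z : bool, pmeet_rel pdiscrete pdiscrete x z -> x = z.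
    by move=> x z [B [[[w ->]|[w ->]] [/= -> ->]]].
  apply: eqS => X /=; split.
  + case=> u ->; exists u; apply: eqS => y /=; split; last first.
      by move=> ->; apply: rst_refl.
    by move=> H; apply/esym; exact: (@crst_eq _ _ R1 _ _ H).
  + case=> u ->; exists u; apply: eqS => y /=; split; first by move=> ->; apply: rst_refl.
    by move=> H; apply/esym; exact: (@crst_eq _ _ R1 _ _ H).
all: apply: eqS => X /=; split; [case=> u -> | move=> ->; exists true];
  apply: eqS => y /=; split => // _; apply: rst_step;
  (exists setT; split => //; by [left|right]).
Qed.

Lemma imp_PB a b : pimp (PB a) (PB b) = PB (~~ a || b).
Proof.
case: a; case: b => /=; rewrite /pimp /pdiscrete /pindiscrete; apply: eqS => X /=; split.
- by case=> [[[u ->] _]|[B [u [_ _ _ ->]]]]; exists u.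
- case=> u ->; right; exists [set u], u; split => //; first by exists u.
  by exists [set u]; split => //; exists u.
- case=> [[-> _]|[B [u [-> [C [[w ->] H]] _ _]]]] //.
  by case: (setT_not1 w); apply: eqS => y; split => // _; apply: H.
- move=> ->; left; split => // [[C [[w ->] H]]].
  by case: (setT_not1 w); apply: eqS => y; split => // _; apply: H.
- by case=> [[[u ->] _]|[B [u [_ _ _ ->]]]]; exists u.
- case=> u ->; right; exists [set u], u; split => //; first by exists u.
  by exists setT.
- by case=> [[-> [] ]|[B [u [_ _ _ ->]]]]; [exists setT|exists u].
- case=> u ->; right; exists setT, u; split => //.
  by exists setT.
Qed.

Lemma part_PB b f : part_eval (fun n => PB (b n)) f = PB (beval b f).
Proof.
elim: f => [n|||x IHx y IHy|x IHx y IHy|x IHx y IHy] //=;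
  by rewrite IHx IHy ?join_PB ?meet_PB ?imp_PB.
Qed.

Lemma PB_part c : is_partition (PB c).
Proof.
case: c; split => /=.
- by move=> B [u ->]; exists u.
- move=> B C [u ->] [w ->] H; apply: eqS => y; split => //= [[-> ?]].
  by subst; apply: H.
- by move=> u; exists [set u]; split => //; exists u.
- by move=> B ->; exists true.
- by move=> B C -> ->.
- by move=> u; exists setT.
Qed.

Lemma part2 U (sigma : set (set U)) : is_partition sigma -> sigma <> @pindiscrete U ->
  pjoin sigma (pimp sigma (@pindiscrete U)) = sigma.
Proof.
case=> Hne Hdis Hcov Hneq.
have noT : ~ exists C, sigma C /\ setT `<=` C.
  case=> C [SC HC]; apply: Hneq; apply: eqS => X; split.
  - move=> SX; have EC : C = setT by apply: eqS => y; split => // _; apply: HC.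
    case: (pselect (X = C)) => [->//|NE].
    case: (Hne _ SX) => x Xx.
    have := Hdis _ _ SX SC NE.
    move=> E; have : (X `&` C) x by split => //; rewrite EC.
    by rewrite E.
  - move=> /= ->.
    have EC : C = setT by apply: eqS => y; split => // _; apply: HC.
    by rewrite -EC.
have Himp : pimp sigma (@pindiscrete U) = [set setT].
  apply: eqS => X; split.
  - case=> [[-> _]//|[B [u [/= BT [C [SC HC]] _ _]]]].
    by case: noT; exists C; split => //; rewrite -BT.
  - move=> /= ->; left; split => //.
rewrite Himp; apply: eqS => X; split.
- by case=> B [C [SB /= -> -> _]]; rewrite setIT.
- move=> SX; exists X, setT; split => //; first by rewrite setIT.
  exact: Hne.
Qed.

Lemma part3 U (u1 u2 u3 : U) : [/\ u1 <> u2, u1 <> u3 & u2 <> u3] ->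
  let sigma := [set X : set U | X = [set u1] \/ X = ~` [set u1]] in
  [/\ is_partition sigma, sigma <> @pindiscrete U & sigma <> @pdiscrete U].
Proof.
case=> H12 H13 H23 sigma; split.
- split.
  + move=> B [->|->]; first by exists u1.
    by exists u2 => /= E; apply: H12.
  + move=> B C [->|->] [->|->] // _; first by rewrite setICr.
    by rewrite setIC setICr.
  + move=> u; case: (pselect (u = u1)) => [->|N].
    * by exists [set u1]; split => //; left.
    * by exists (~` [set u1]); split => //; right.
- move=> E; have : (@pindiscrete U) [set u1] by rewrite -E; left.
  move=> /= E2; have : [set u1] u2 by rewrite E2.
  by move=> /= E3; apply: H12.
- move=> E; have : (@pdiscrete U) (~` [set u1]) by rewrite -E; right.
  case=> w Ew.
  have h2 : (~` [set u1]) u2 by move=> /= E'; apply: H12.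
  have h3 : (~` [set u1]) u3 by move=> /= E'; apply: H13.
  rewrite Ew /= in h2 h3; apply: H23; by rewrite h2 h3.
Qed.

Theorem mainTheorem8 :
  (forall f : formula, partition_tautology f -> subset_tautology f) /\
  (forall (U : Type) (sigma : set (set U)),
      is_partition sigma -> sigma <> @pindiscrete U -> sigma <> @pdiscrete U ->
      pjoin sigma (pimp sigma (@pindiscrete U)) = sigma /\ sigma <> @pdiscrete U) /\
  (forall U : Type, (exists u1 u2 u3 : U, [/\ u1 <> u2, u1 <> u3 & u2 <> u3]) ->
      exists sigma : set (set U),
        [/\ is_partition sigma, sigma <> @pindiscrete U & sigma <> @pdiscrete U]) /\
  subset_tautology excluded_middle_formula /\
  ~ partition_tautology excluded_middle_formula.
Proof.
split; [|split; [|split; [|split]]].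
- move=> f Hf U _ v; apply: eqS => u; split => // _.
  apply/sub_beval.
  have Ht : exists u u' : bool, u <> u' by exists true, false.
  have := Hf bool Ht
    (fun n => PB (`[< v n u >])) (fun n => PB_part _).
  rewrite part_PB; case: (beval _ f) => //= H.
  have : (@pdiscrete bool) setT by rewrite -H.
  by case=> w /setT_not1.
- move=> U sigma Hp H0 H1; split => //; exact: part2.
- move=> U [u1 [u2 [u3 H]]]; exists [set X : set U | X = [set u1] \/ X = ~` [set u1]].
  exact: part3 H.
- move=> U _ v; apply: eqS => u; split => // _ /=.
  case: (pselect (v 0 u)) => H; [left|right; left] => //.
- move=> H.
  have H3 : [/\ (0:nat) <> 1, (0:nat) <> 2 & (1:nat) <> 2] by [].
  case: (@part3 _ _ _ _ H3) => Hp Hn0 Hn1.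
  have Ht : exists u u' : nat, u <> u' by exists 0, 1.
  have := H nat Ht
    (fun _ => [set X : set nat | X = [set 0] \/ X = ~` [set 0]]) (fun _ => Hp).
  rewrite /= part2 //.
Qed.
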